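(* Let $P\subset\mathbb{R}^d$ be a finite dataset with $|P|=n$, let $s$ be the number of compute nodes, $t<s$, $\delta>0$, and let $A\in\{0,1\}^{s\times n}$ (columns indexed by the points of $P$) satisfy the straggler-resilience property with parameter $\delta$. For $i\in[s]$ let $P_i$ be the set of points $\mathbf{p}\in P$ whose column has a $1$ in row $i$. Let $\mathcal{R}\subseteq[s]$ with $|\mathcal{R}|\ge s-t$ and let $\mathbf{b}=(b_i)_{i\in\mathcal{R}}$ be a corresponding non-negative recovery vector. For each $i\in\mathcal{R}$ let $Y_i\subset\mathbb{R}^d$ be an optimal set of $k$ $k$-median centers for $P_i$ (i.e. $Y_i$ minimizes $\mathrm{cost}(P_i,\cdot)$ over all sets of $k$ points of $\mathbb{R}^d$), and define $w_i:Y_i\to\mathbb{R}$ by $w_i(\mathbf{c})=|\mathrm{cluster}(\mathbf{c},P_i)|$. Let $Y=\bigcup_{i\in\mathcal{R}}Y_i$ with weight $w(\mathbf{c})=\sum_{i\in\mathcal{R}:\,\mathbf{c}\in Y_i}b_i\,w_i(\mathbf{c})$. Then for every set $C\subset\mathbb{R}^d$ of $k$ centers, $$\mathrm{cost}(P,C)-\sum_{i\in\mathcal{R}}b_i\,\mathrm{cost}(P_i,Y_i)\le\mathrm{cost}(Y,C,w)\le 2(1+\delta)\,\mathrm{cost}(P,C).$$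
   Context: $d(\mathbf{x},C)=\min_{\mathbf{c}\in C}\|\mathbf{x}-\mathbf{c}\|_2$. The $k$-median cost is $\mathrm{cost}(Q,C)=\sum_{\mathbf{q}\in Q}d(\mathbf{q},C)$, and for a weighted set $(Q,w)$, $\mathrm{cost}(Q,C,w)=\sum_{\mathbf{q}\in Q}w(\mathbf{q})d(\mathbf{q},C)$. For a center set $Y_i$, $\mathrm{cluster}(\mathbf{c},P_i)$ is the set of points of $P_i$ whose closest center in $Y_i$ is $\mathbf{c}$ (ties broken arbitrarily so that the clusters partition $P_i$). Straggler-resilience property with parameter $\delta$: for every $\mathcal{R}\subseteq[s]$ with $|\mathcal{R}|\ge s-t$, letting $A_{\mathcal{R}}$ be the rows of $A$ indexed by $\mathcal{R}$, there is a vector $\mathbf{b}\in\mathbb{R}^{|\mathcal{R}|}$ with non-negative entries (a recovery vector) such that $\mathbf{b}^TA_{\mathcal{R}}=(a_1,\ldots,a_n)$ with $1\le a_j\le 1+\delta$ for all $j$. *)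

(* Defs.v *)
From HB Require Import structures.
From mathcomp Require Import all_boot all_order all_algebra.
From mathcomp Require Import finmap.
From mathcomp Require Import reals.
Set Implicit Arguments. Unset Strict Implicit. Unset Printing Implicit Defensive.
Import Order.TTheory GRing.Theory Num.Theory.
Local Open Scope ring_scope.

Section KMedian.
Variables (R : realType) (d : nat).
Notation pt := 'rV[R]_d.

Definition edist (x y : pt) : R := Num.sqrt (\sum_(j < d) (x 0 j - y 0 j) ^+ 2).

(* d(x, C) = min_{c in C} ||x - c||_2  (meaningful for nonempty C) *)
Definition dist_set (x : pt) (C : {fset pt}) : R :=
  \big[Num.min/edist x (head x (enum_fset C))]_(c <- C) edist x c.

Definition cost (n : nat) (p : 'I_n -> pt) (Q : {set 'I_n}) (C : {fset pt}) : R :=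
  \sum_(j in Q) dist_set (p j) C.

Definition wcost (Q : {fset pt}) (C : {fset pt}) (w : pt -> R) : R :=
  \sum_(q <- Q) w q * dist_set q C.

Definition straggler_resilient (s n t : nat) (delta : R) (A : 'M[R]_(s, n)) : Prop :=
  forall Rs : {set 'I_s}, (s - t <= #|Rs|)%N ->
    exists b : 'I_s -> R, (forall i, i \in Rs -> 0 <= b i) /\
      forall j : 'I_n, 1 <= \sum_(i in Rs) b i * A i j <= 1 + delta.

Definition Pi (s n : nat) (A : 'M[R]_(s, n)) (i : 'I_s) : {set 'I_n} :=
  [set j | A i j == 1].

(* cluster assignment: a maps every point of Q to a closest center of Y
   (ties broken arbitrarily, so clusters partition Q) *)
Definition closest_assignment (n : nat) (p : 'I_n -> pt) (Q : {set 'I_n})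
  (Y : {fset pt}) (a : 'I_n -> pt) : Prop :=
  forall j, j \in Q -> a j \in Y /\ edist (p j) (a j) = dist_set (p j) Y.

Definition cluster_size (n : nat) (Q : {set 'I_n}) (a : 'I_n -> pt) (c : pt) : R :=
  #|[set j in Q | a j == c]|%:R.

End KMedian.

(* Main.v *)
Require Import Defs.
From HB Require Import structures.
From mathcomp Require Import all_boot all_order all_algebra.
From mathcomp Require Import finmap.
From mathcomp Require Import reals.
From mathcomp Require Import ring lra.
Import Order.TTheory GRing.Theory Num.Theory.
Local Open Scope ring_scope.

Section Aux.
Variables (R : realType) (d : nat).
Notation pt := 'rV[R]_d.

Lemma CS (u v : 'I_d -> R) :
  (\sum_i u i * v i) ^+ 2 <= (\sum_i u i ^+ 2) * (\sum_i v i ^+ 2).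
Proof.
have H : 0 <= \sum_i \sum_j (u i * v j - u j * v i) ^+ 2.
  by apply: sumr_ge0 => i _; apply: sumr_ge0 => j _; exact: sqr_ge0.
have E : \sum_i \sum_j (u i * v j - u j * v i) ^+ 2 =
  (\sum_i \sum_j (u i ^+ 2 * v j ^+ 2)) + (\sum_i \sum_j (v i ^+ 2 * u j ^+ 2))
   - 2 * (\sum_i \sum_j ((u i * v i) * (u j * v j))).
  rewrite mulr_sumr -big_split /= -sumrB; apply: eq_bigr => i _.
  rewrite mulr_sumr -big_split /= -sumrB; apply: eq_bigr => j _.
  ring.
rewrite -!big_distrlr /= in E.
rewrite E [(\sum_i v i ^+ 2) * _]mulrC in H.
rewrite expr2; lra.
Qed.

Lemma edist_ge0 (x y : pt) : 0 <= edist x y.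
Proof. exact: sqrtr_ge0. Qed.

Lemma edist_sym (x y : pt) : edist x y = edist y x.
Proof.
rewrite /edist; congr Num.sqrt; apply: eq_bigr => j _.
by rewrite -sqrrN opprB.
Qed.

Lemma edist_tri (x y z : pt) : edist x z <= edist x y + edist y z.
Proof.
rewrite /edist.
set u := fun j => x 0 j - y 0 j.
set v := fun j => y 0 j - z 0 j.
have -> : \sum_(j < d) (x 0 j - z 0 j) ^+ 2 = \sum_j (u j + v j) ^+ 2.
  by apply: eq_bigr => j _; rewrite /u /v; congr (_ ^+ 2); ring.
rewrite -/(\sum_j u j ^+ 2) -/(\sum_j v j ^+ 2).
have Su : 0 <= \sum_j u j ^+ 2 by apply: sumr_ge0 => j _; exact: sqr_ge0.
have Sv : 0 <= \sum_j v j ^+ 2 by apply: sumr_ge0 => j _; exact: sqr_ge0.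
have -> : \sum_j (u j + v j) ^+ 2 =
   \sum_j u j ^+ 2 + 2 * \sum_j u j * v j + \sum_j v j ^+ 2.
  rewrite mulr_sumr -!big_split /=; apply: eq_bigr => j _; ring.
have hu := sqrtr_ge0 (\sum_j u j ^+ 2).
have hv := sqrtr_ge0 (\sum_j v j ^+ 2).
rewrite -(@ler_pXn2r _ 2) ?nnegrE ?addr_ge0 ?sqrtr_ge0 //.
rewrite sqr_sqrtr; last first.
  rewrite -[_ + _ + _](_ : \sum_j (u j + v j) ^+ 2 = _); last first.
    rewrite mulr_sumr -!big_split /=; apply: eq_bigr => j _; ring.
  by apply: sumr_ge0 => j _; exact: sqr_ge0.
have cs := CS u v.
have key : \sum_j u j * v j <= Num.sqrt (\sum_j u j ^+ 2) * Num.sqrt (\sum_j v j ^+ 2).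
  rewrite -sqrtrM //.
  apply: le_trans (ler_norm _) _.
  by rewrite -sqrtr_sqr ler_wsqrtr.
have e1 := sqr_sqrtr Su. have e2 := sqr_sqrtr Sv.
rewrite sqrrD e1 e2; lra.
Qed.


Lemma bigmin_attain (r : seq pt) (x0 : R) (f : pt -> R) :
  \big[Num.min/x0]_(c <- r) f c = x0 \/
  exists2 c, c \in r & \big[Num.min/x0]_(c <- r) f c = f c.
Proof.
elim: r => [|h r IH]; first by left; rewrite big_nil.
rewrite big_cons; case: (leP (f h) (\big[Num.min/x0]_(c <- r) f c)) => H.
  by right; exists h; rewrite ?mem_head.
case: IH => [->|[c cr ->]]; first by left.
by right; exists c => //; rewrite inE cr orbT.
Qed.

Lemma dist_set_le (x c : pt) (C : {fset pt}) : c \in C -> dist_set x C <= edist x c.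
Proof. by move=> cC; rewrite /dist_set; apply: ge_bigmin_seq. Qed.

Lemma dist_set_ge0 (x : pt) (C : {fset pt}) : 0 <= dist_set x C.
Proof.
rewrite /dist_set; apply: (big_ind (fun v => 0 <= v)) => //; first exact: edist_ge0.
move=> u v hu hv; rewrite le_min hu hv //.
by move=> c _; exact: edist_ge0.
Qed.

Lemma dist_set_attain (x : pt) (C : {fset pt}) : C != fset0 ->
  exists2 c, c \in C & dist_set x C = edist x c.
Proof.
move=> C0; have [h hC] : exists h, h \in C.
  by case/fset0Pn: C0 => h hC; exists h.
case: (bigmin_attain (enum_fset C) (edist x (head x (enum_fset C))) (edist x)).
  move=> E; exists (head x (enum_fset C)); last by rewrite /dist_set E.
  suff : head x (enum_fset C) \in enum_fset C by [].
  have : h \in enum_fset C := hC.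
  by case: (enum_fset C) => // a l _; rewrite mem_head.
by case=> c cC E; exists c.
Qed.

Lemma dist_set_tri (x y : pt) (C : {fset pt}) : C != fset0 ->
  dist_set x C <= edist x y + dist_set y C.
Proof.
move=> C0; have [c cC ->] := @dist_set_attain y C C0.

apply: le_trans (@dist_set_le x c C cC) _; exact: edist_tri.

Qed.


Lemma sum_cluster (n : nat) (Q : {set 'I_n}) (Yi : {fset pt}) (a : 'I_n -> pt)
  (f : pt -> R) : (forall j, j \in Q -> a j \in Yi) ->
  \sum_(q <- Yi) cluster_size Q a q * f q = \sum_(j in Q) f (a j).
Proof.
move=> HY.
under eq_bigr => q _ do rewrite /cluster_size mulr_natl -sumr_const big_mkcond /=.
rewrite exchange_big /= [RHS]big_mkcond /=; apply: eq_bigr => j _.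
case jP: (j \in Q).
  have ajY := HY j jP.
  rewrite (bigD1_seq (a j)) ?fset_uniq //= inE jP eqxx /= big1 ?addr0 //.
  by move=> q /negbTE qa; rewrite inE jP eq_sym qa.
by rewrite big1 // => q _; rewrite inE jP.
Qed.

End Aux.

Theorem lemma2 (R : realType) (d n s t k : nat) (delta : R)
  (p : 'I_n -> 'rV[R]_d) (A : 'M[R]_(s, n))
  (Rs : {set 'I_s}) (b : 'I_s -> R)
  (Y : 'I_s -> {fset 'rV[R]_d}) (a : 'I_s -> 'I_n -> 'rV[R]_d) :
  injective p ->
  (0 < k)%N ->
  (t < s)%N ->
  0 < delta ->
  (forall i j, A i j = 0 \/ A i j = 1) ->
  straggler_resilient t delta A ->
  (s - t <= #|Rs|)%N ->
  (forall i, i \in Rs -> 0 <= b i) ->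
  (forall j : 'I_n, 1 <= \sum_(i in Rs) b i * A i j <= 1 + delta) ->
  (forall i, i \in Rs -> (#|` Y i| = k)%fset) ->
  (forall i, i \in Rs -> forall C : {fset 'rV[R]_d}, (#|` C| = k)%fset ->
       cost p (Pi A i) (Y i) <= cost p (Pi A i) C) ->
  (forall i, i \in Rs -> closest_assignment p (Pi A i) (Y i) (a i)) ->
  let Yall := (\bigcup_(i <- enum Rs) Y i)%fset in
  let w := fun c => \sum_(i in Rs | c \in Y i) b i * cluster_size (Pi A i) (a i) c in
  forall C : {fset 'rV[R]_d}, (#|` C| = k)%fset ->
    cost p setT C - \sum_(i in Rs) b i * cost p (Pi A i) (Y i) <= wcost Yall C w
    /\ wcost Yall C w <= 2 * (1 + delta) * cost p setT C.
Proof.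
move=> _ k0 _ dpos A01 _ _ b0 hb _ opt clo Yall w C HC.
have C0 : C != fset0.
  by apply/eqP => E; rewrite E cardfs0 in HC; rewrite -HC in k0.
set D := fun q => dist_set q C.
have W : wcost Yall C w = \sum_(i in Rs) b i * \sum_(j in Pi A i) D (a i j).
  rewrite /wcost /w.
  under eq_bigr => q _ do rewrite mulr_suml big_mkcondr /=.
  rewrite exchange_big /=; apply: eq_bigr => i iR.
  have sub : (Y i `<=` Yall)%fset.
    by apply: bigfcup_sup => //; rewrite mem_enum.
  rewrite -(big_fset_incl _ sub); last by move=> x _ /negbTE ->.
  under eq_big_seq => q qY do rewrite qY.
  under eq_bigr do rewrite -mulrA.
  rewrite -mulr_sumr; congr (b i * _).
  apply: (@sum_cluster R d n (Pi A i) (Y i) (a i) D) => j jP.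
  by have [] := clo i iR j jP.
have K : forall f : 'I_n -> R, \sum_(i in Rs) b i * \sum_(j in Pi A i) f j
    = \sum_j (\sum_(i in Rs) b i * A i j) * f j.
  move=> f.
  under eq_bigr => i _ do rewrite big_mkcond mulr_sumr /=.
  rewrite exchange_big /=; apply: eq_bigr => j _; rewrite mulr_suml.
  apply: eq_bigr => i _; rewrite inE; case: (A01 i j) => ->.
    by rewrite eq_sym oner_eq0 !mulr0 mul0r.
  by rewrite eqxx mulr1.
have cT : cost p setT C = \sum_j D (p j).
  by rewrite /cost; apply: eq_bigl => j; rewrite in_setT.
have Kc : \sum_(i in Rs) b i * cost p (Pi A i) C = \sum_j (\sum_(i in Rs) b i * A i j) * D (p j).
  exact: (K (fun j => D (p j))).
have Li : forall i, i \in Rs ->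
    cost p (Pi A i) C <= cost p (Pi A i) (Y i) + \sum_(j in Pi A i) D (a i j).
  move=> i iR; rewrite /cost -big_split /=; apply: ler_sum => j jP.
  have [_ e] := clo i iR j jP; rewrite -e; exact: dist_set_tri.
have Ui : forall i, i \in Rs ->
    \sum_(j in Pi A i) D (a i j) <= cost p (Pi A i) (Y i) + cost p (Pi A i) C.
  move=> i iR; rewrite /cost -big_split /=; apply: ler_sum => j jP.
  have [_ e] := clo i iR j jP; rewrite -e edist_sym; exact: dist_set_tri.
have Dp : forall j, 0 <= D (p j) by move=> j; exact: dist_set_ge0.
split.
  have h1 : cost p setT C <= \sum_(i in Rs) b i * cost p (Pi A i) C.
    rewrite cT Kc; apply: ler_sum => j _.
    have [h _] := andP (hb j).
    by rewrite -[X in X <= _]mul1r; apply: ler_wpM2r.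
  have h2 : \sum_(i in Rs) b i * cost p (Pi A i) C <=
      \sum_(i in Rs) b i * cost p (Pi A i) (Y i) + wcost Yall C w.
    rewrite W -big_split /=; apply: ler_sum => i iR.
    by rewrite -mulrDr; apply: ler_wpM2l; [exact: b0 | exact: Li].
  lra.
rewrite W.
have h1 : \sum_(i in Rs) b i * \sum_(j in Pi A i) D (a i j) <=
    2 * \sum_(i in Rs) b i * cost p (Pi A i) C.
  rewrite mulr_sumr; apply: ler_sum => i iR.
  rewrite mulrCA; apply: ler_wpM2l; first exact: b0.
  have := Ui i iR; have := opt i iR C HC; lra.
apply: le_trans h1 _.
rewrite Kc cT -mulrA; apply: ler_wpM2l => //.
rewrite mulr_sumr; apply: ler_sum => j _.
have [_ h] := andP (hb j).
by apply: ler_wpM2r.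
Qed.
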